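(* Let $G$ be a group and $S\subseteq G$ a conjugation invariant generating set of $G$. Suppose there exist homogeneous quasi-morphisms $q_1,\dots,q_m:G\to\mathbb{R}$ which are linearly independent (as elements of the real vector space of functions $G\to\mathbb R$) and each of which is bounded on $S$. Then there is a quasi-isometric embedding of $\mathbb{Z}^m$ into $\mathrm{Cay}(G,S)$.
   Context: A quasi-morphism is a function $q:G\to\mathbb{R}$ with $\sup_{g,h\in G}|q(gh)-q(g)-q(h)|<\infty$ (this supremum is the defect); it is homogeneous if $q(g^k)=kq(g)$ for all $g\in G$, $k\in\mathbb{Z}$. $S$ is conjugation invariant if $gsg^{-1}\in S$ for all $g\in G$, $s\in S$. $\mathrm{Cay}(G,S)$ is the graph with vertex set $G$ and an (undirected) edge between $g$ and $sg$ for every $g\in G$, $s\in S$, with the path metric in which edges have length $1$. $\mathbb{Z}^m$ carries the $\ell^1$ metric. A map $f$ between metric spaces is a quasi-isometric embedding if there are $K\ge1,C\ge0$ with $\frac1K d(x,y)-C\le d(f(x),f(y))\le Kd(x,y)+C$. *)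

(* Defs.v *)
From HB Require Import structures.
From mathcomp Require Import all_boot all_order all_algebra.
From mathcomp Require Import Rstruct.
Set Implicit Arguments. Unset Strict Implicit. Unset Printing Implicit Defensive.
Import Order.TTheory GRing.Theory Num.Theory.
Local Open Scope ring_scope.

Record group := Group {
  gcar :> Type;
  gmul : gcar -> gcar -> gcar;
  gone : gcar;
  ginv : gcar -> gcar;
  gmulA : forall x y z, gmul x (gmul y z) = gmul (gmul x y) z;
  gmul1g : forall x, gmul gone x = x;
  gmulg1 : forall x, gmul x gone = x;
  gmulVg : forall x, gmul (ginv x) x = gone;
  gmulgV : forall x, gmul x (ginv x) = gone }.

Section GroupDefs.
Variable G : group.

Definition gpown (g : G) (n : nat) : G := iter n (gmul g) (gone G).
Definition gpowz (g : G) (k : int) : G :=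
  match k with
  | Posz n => gpown g n
  | Negz n => ginv (gpown g n.+1)
  end.

Definition quasi_morphism (q : G -> Rdefinitions.R) : Prop :=
  exists D : Rdefinitions.R, forall g h : G, `|q (gmul g h) - q g - q h| <= D.

Definition homogeneous (q : G -> Rdefinitions.R) : Prop :=
  forall (g : G) (k : int), q (gpowz g k) = k%:~R * q g.

Definition conj_invariant (S : G -> Prop) : Prop :=
  forall g s : G, S s -> S (gmul (gmul g s) (ginv g)).

(* walk n g h : there is an edge path of length n in Cay(G,S) from g to h;
   edges join x and s*x for s in S (traversed both ways). *)
Inductive walk (S : G -> Prop) : nat -> G -> G -> Prop :=
  | walk0 : forall g, walk S 0 g g
  | walkF : forall n g h s, walk S n g h -> S s -> walk S n.+1 g (gmul s h)
  | walkB : forall n g h s, walk S n g h -> S s -> walk S n.+1 g (gmul (ginv s) h).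

Definition generates (S : G -> Prop) : Prop :=
  forall g : G, exists n, walk S n (gone G) g.

Definition cay_dist (S : G -> Prop) (g h : G) (n : nat) : Prop :=
  walk S n g h /\ forall k, walk S k g h -> (n <= k)%N.

End GroupDefs.

Definition l1_dist (m : nat) (x y : 'I_m -> int) : nat :=
  (\sum_(i < m) `|x i - y i|%N)%N.

Definition linearly_independent (X : Type) (m : nat) (q : 'I_m -> X -> Rdefinitions.R) : Prop :=
  forall c : 'I_m -> Rdefinitions.R,
    (forall x : X, \sum_(i < m) c i * q i x = 0) -> forall i, c i = 0.

Definition qi_embedding (G : group) (S : G -> Prop) (m : nat)
    (f : ('I_m -> int) -> G) : Prop :=
  exists K C : Rdefinitions.R, 1 <= K /\ 0 <= C /\
    forall (x y : 'I_m -> int) (n : nat), cay_dist S (f x) (f y) n ->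
      (l1_dist x y)%:R / K - C <= n%:R /\ n%:R <= K * (l1_dist x y)%:R + C.

(* Main.v *)
Require Import Defs.
From mathcomp Require Import all_boot all_order all_algebra.
From mathcomp Require Import Rstruct.
From Stdlib Require Import Classical ClassicalEpsilon.
From mathcomp Require Import lra.
Import Order.TTheory GRing.Theory Num.Theory.
Local Open Scope ring_scope.
Set Implicit Arguments. Unset Strict Implicit.

Section GR.
Variable G : group.
Local Notation "x * y" := (gmul x y) : group_scope.
Local Notation "1" := (gone G) : group_scope.
Local Open Scope group_scope.

Lemma ginv_uniq (x y : G) : x * y = 1 -> ginv x = y.
Proof. by move=> H; rewrite -[ginv x]gmulg1 -H gmulA gmulVg gmul1g. Qed.

Lemma ginvM (x y : G) : ginv (x * y) = ginv y * ginv x.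
Proof.
apply: ginv_uniq; rewrite gmulA -[x * y * ginv y]gmulA gmulgV gmulg1 gmulgV //.
Qed.

Lemma ginvK (x : G) : ginv (ginv x) = x.
Proof. by apply: ginv_uniq; rewrite gmulVg. Qed.

Lemma ginv1 : ginv (1 : G) = 1.
Proof. by apply: ginv_uniq; rewrite gmul1g. Qed.

Lemma gmulVK (x y : G) : x * ginv y * y = x.
Proof. by rewrite -gmulA gmulVg gmulg1. Qed.
Lemma gmulKV (x y : G) : x * y * ginv y = x.
Proof. by rewrite -gmulA gmulgV gmulg1. Qed.

Variable S : G -> Prop.

Lemma walk_mulr n (g h a : G) : walk S n g h -> walk S n (g * a) (h * a).
Proof.
elim=> [x|k x y s _ IH Ss|k x y s _ IH Ss]; first exact: walk0.
  by rewrite -gmulA; apply: walkF.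
by rewrite -gmulA; apply: walkB.
Qed.

Lemma walk_cat n k (g h l : G) : walk S n g h -> walk S k h l -> walk S (n + k) g l.
Proof.
move=> W1 W2; elim: W2 W1 => [x|j x y s _ IH Ss|j x y s _ IH Ss] W1.
  by rewrite addn0.
  by rewrite addnS; apply: walkF => //; apply: IH.
by rewrite addnS; apply: walkB => //; apply: IH.
Qed.

Lemma walk_rev n (g h : G) : walk S n g h -> walk S n h g.
Proof.
elim=> [x|k x y s _ IH Ss|k x y s _ IH Ss]; first exact: walk0.
  have W : walk S 1 (s * y) y.
    have := walkB (walk0 S (s * y)) Ss; by rewrite gmulA gmulVg gmul1g.
  by rewrite -add1n; apply: walk_cat W IH.
have W : walk S 1 (ginv s * y) y.
  have := walkF (walk0 S (ginv s * y)) Ss; by rewrite gmulA gmulgV gmul1g.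
by rewrite -add1n; apply: walk_cat W IH.
Qed.

Hypothesis CI : conj_invariant S.

Lemma walk_conj n (g h a : G) : walk S n g h -> walk S n (a * g * ginv a) (a * h * ginv a).
Proof.
elim=> [x|k x y s _ IH Ss|k x y s _ IH Ss]; first exact: walk0.
  have -> : a * (s * y) * ginv a = (a * s * ginv a) * (a * y * ginv a).
    by rewrite !gmulA gmulVK.
  by apply: walkF => //; apply: CI.
have -> : a * (ginv s * y) * ginv a = ginv (a * s * ginv a) * (a * y * ginv a).
  by rewrite !ginvM ginvK !gmulA gmulVK.
by apply: walkB => //; apply: CI.
Qed.

Lemma walk_from1 n (g h : G) : walk S n g h -> walk S n 1 (h * ginv g).
Proof. by move/(walk_mulr (ginv g)); rewrite gmulgV. Qed.

Lemma gpownS (g : G) n : gpown g n.+1 = g * gpown g n.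
Proof. by []. Qed.

Lemma gpownSr (g : G) n : gpown g n.+1 = gpown g n * g.
Proof.
elim: n => [|n IH]; first by rewrite /gpown /= gmulg1 gmul1g.
by rewrite {1}(gpownS g n.+1) {1}IH gmulA -gpownS.
Qed.


Lemma gpowz_add1 (g : G) (k : int) : gpowz g (k + 1) = g * gpowz g k.
Proof.
case: k => n.
  by rewrite /= addn1.
case: n => [|n].
  have -> : (Negz 0 + 1 = 0)%R by [].
  by rewrite /= gmulg1 gmulgV.
have -> : (Negz n.+1 + 1 = Negz n)%R.
  by rewrite !NegzE -addn1 PoszD opprD addrK.
change (ginv (gpown g n.+1) = g * ginv (gpown g n.+2)).
by rewrite (gpownSr g n.+1) ginvM gmulA gmulgV gmul1g.
Qed.

Lemma gpowz_sub1 (g : G) (k : int) : gpowz g (k - 1) = ginv g * gpowz g k.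
Proof.
have -> : gpowz g k = g * gpowz g (k - 1) by rewrite -gpowz_add1 subrK.
by rewrite gmulA gmulVg gmul1g.
Qed.

Lemma gpowz_add (g : G) (k l : int) : gpowz g (k + l) = gpowz g k * gpowz g l.
Proof.
elim/int_rec: k => [|k IH|k IH].
- by rewrite add0r /= gmul1g.
- by rewrite -addn1 PoszD addrAC !gpowz_add1 IH gmulA.
- by rewrite -addn1 PoszD opprD addrAC !gpowz_sub1 IH gmulA.
Qed.

Lemma walk_pow n (g : G) (k : int) : walk S n 1 g -> walk S (`|k|%N * n) 1 (gpowz g k).
Proof.
move=> W.
have Hp : forall j : nat, walk S (j * n) 1 (gpown g j).
  elim=> [|j IH]; first exact: walk0.
  rewrite mulSn gpownSr; apply: walk_cat W _.
  by have := walk_mulr g IH; rewrite gmul1g.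
case: k => j; first exact: Hp.
have := walk_from1 (walk_rev (Hp j.+1)); by rewrite gmul1g.
Qed.
End GR.
Section QM.
Variable G : group.
Variable S : G -> Prop.
Variables (phi : G -> Rdefinitions.R) (D B : Rdefinitions.R).
Hypothesis Hh : homogeneous phi.
Hypothesis HD : forall g h : G, `|phi (gmul g h) - phi g - phi h| <= D.
Hypothesis HB : forall s, S s -> `|phi s| <= B.

Lemma qm1 : phi (gone G) = 0.
Proof. by have := Hh (gone G) 0; rewrite /= mul0r. Qed.

Lemma qmV (x : G) : phi (ginv x) = - phi x.
Proof.
have := Hh x (-1); rewrite /= /gpown /= gmulg1 => ->.
by rewrite mulN1r.
Qed.

Lemma qm_walk n (g h : G) : walk S n g h -> `|phi (gmul h (ginv g))| <= n%:R * (B + D).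
Proof.
elim=> [x|k x y s _ IH Ss|k x y s _ IH Ss].
- by rewrite gmulgV qm1 normr0 mul0r.
- have E := HD s (gmul y (ginv x)); have Hs := HB Ss.
  rewrite -gmulA; move: E Hs IH; set a := phi _; set b := phi _; set c := phi _.
  rewrite -addn1 natrD mulrDl mul1r.
  move=> E Hs IH.
  move: E Hs IH; rewrite !ler_norml => /andP[? ?] /andP[? ?] /andP[? ?].
  apply/andP; split; lra.
- have E := HD (ginv s) (gmul y (ginv x)); have Hs := HB Ss.
  rewrite -gmulA; move: E Hs IH; rewrite qmV; set a := phi _; set b := phi _; set c := phi _.
  rewrite -addn1 natrD mulrDl mul1r.
  move=> E Hs IH.
  move: E Hs IH; rewrite !ler_norml => /andP[? ?] /andP[? ?] /andP[? ?].
  apply/andP; split; lra.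
Qed.
End QM.
Section Main.
Variable G : group.
Variable S : G -> Prop.
Hypothesis CI : conj_invariant S.
Variable m : nat.
Variable gs : 'I_m -> G.

Definition ext {T} (d : T) (z : 'I_m -> T) (i : nat) : T :=
  if (insub i : option 'I_m) is Some j then z j else d.

Lemma ext_ord {T} (d : T) z (i : 'I_m) : ext d z i = z i.
Proof. by rewrite /ext valK. Qed.

Fixpoint FF (k : nat) (z : 'I_m -> int) : G :=
  match k with 0 => gone G | k.+1 => gmul (FF k z) (gpowz (ext (gone G) gs k) (ext 0 z k)) end.

Lemma upper (L : nat -> nat) : (forall i, walk S (L i) (gone G) (ext (gone G) gs i)) ->
  forall k (x y : 'I_m -> int), walk S (\sum_(i < k) `|ext (0:int) y i - ext (0:int) x i|%N * L i)%N (FF k x) (FF k y).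
Proof.
move=> HL; elim=> [|k IH] x y; first by rewrite big_ord0; exact: walk0.
rewrite big_ord_recr /=.
set g := ext (gone G) gs k; set a := ext 0 x k; set b := ext 0 y k.
apply: walk_cat; first exact: walk_mulr (IH x y).
have W := walk_pow (b - a) (HL k).
have W2 := walk_conj CI (FF k y) W.
have W3 := walk_mulr (gmul (FF k y) (gpowz g a)) W2.
move: W3; rewrite gmulg1 gmulgV gmul1g gmulA gmulVK -gmulA -gpowz_add subrK //.
Qed.

Section Low.
Variables (phi : G -> Rdefinitions.R) (D : Rdefinitions.R).
Hypothesis Hh : homogeneous phi.
Hypothesis HD : forall g h : G, `|phi (gmul g h) - phi g - phi h| <= D.

Lemma lower k z : `|phi (FF k z) - \sum_(i < k) (ext 0 z i)%:~R * phi (ext (gone G) gs i)| <= k%:R * D.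
Proof.
elim: k => [|k IH]; first by rewrite big_ord0 /= qm1 // subr0 normr0 mul0r.
rewrite big_ord_recr /= -addn1 natrD mulrDl mul1r.
have E := HD (FF k z) (gpowz (ext (gone G) gs k) (ext 0 z k)).
move: E IH; rewrite Hh.
set a := phi _; set b := phi _; set c := phi _; set s := \sum_(i < k) _.
rewrite !ler_norml => /andP[? ?] /andP[? ?].
apply/andP; split; lra.
Qed.
End Low.
End Main.

Section LA.
Variables (X : Type) (m : nat) (q : 'I_m -> X -> Rdefinitions.R).
Hypothesis LI : linearly_independent q.

Definition evm n (h : 'I_n -> X) : 'M[Rdefinitions.R]_(n, m) := \matrix_(a, i) q i (h a).
Definition evr (x : X) : 'rV[Rdefinitions.R]_m := \row_i q i x.

Lemma not_all_sub n (A : 'M[Rdefinitions.R]_(n, m)) : (\rank A < m)%N ->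
  exists x, ~~ (evr x <= A)%MS.
Proof.
move=> rk; apply: NNPP => H.
have Hx : forall x, (evr x <= A)%MS.
  by move=> x; apply: NNPP => Hn; apply: H; exists x; apply/negP.
have : cokermx A != 0.
  by rewrite -mxrank_eq0 mxrank_coker subn_eq0 -ltnNge.
case/matrix0Pn => i0 [j Hij].
suff /(LI (c := fun i => cokermx A i j)) /(_ i0) E : forall x, \sum_(i < m) cokermx A i j * q i x = 0 by rewrite E eqxx in Hij.
move=> x; have /submxP [D HD] := Hx x.
apply: (@eq_trans _ _ ((evr x *m cokermx A) 0 j)); last first.
  by rewrite HD -mulmxA mulmx_coker mulmx0 mxE.
rewrite mxE; apply: eq_bigr => i _; by rewrite [evr x 0 i]mxE mulrC.
Qed.

Lemma rank_grow k : (k <= m)%N -> exists n (h : 'I_n -> X), (k <= \rank (evm h))%N.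
Proof.
elim: k => [|k IH] km.
  exists 0%N; have h : 'I_0 -> X by case. 
  by exists h.
have [n [h Hk]] := IH (ltnW km).
case: (leqP k.+1 (\rank (evm h))) => Hr; first by exists n, h.
have rk : (\rank (evm h) < m)%N by apply: leq_ltn_trans km; rewrite -ltnS.
have [x Hx] := not_all_sub rk.
exists (n + 1)%N, (fun a => match split a with inl a => h a | inr _ => x end).
have -> : evm (fun a => match split a with inl a => h a | inr _ => x end)
   = col_mx (evm h) (evr x).
  by apply/matrixP => a i; rewrite !mxE; case: (split a) => b; rewrite !mxE.
have lt : (evm h < col_mx (evm h) (evr x))%MS.
  have := submx_refl (col_mx (evm h) (evr x)); rewrite col_mx_sub => /andP [s1 s2].
  rewrite ltmxE s1 /= col_mx_sub negb_and Hx orbT //.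
have := rank_ltmx lt; apply: leq_trans; by rewrite ltnS.
Qed.

Lemma basis_ex : exists (h : 'I_m -> X) (N : 'M[Rdefinitions.R]_m),
  forall j l, \sum_i N j i * q i (h l) = (j == l)%:R.
Proof.
have [n [h Hk]] := rank_grow (leqnn m).
have rf : row_full (evm h).
  by rewrite /row_full eqn_leq rank_leq_col.
set f := fullrankfun rf.
have U := fullrowsub_unit rf.
exists (fun k => h (f k)), (invmx (rowsub f (evm h))^T).
move=> j l.
have U' : (rowsub f (evm h))^T \in unitmx by rewrite unitmx_tr.
have := mulVmx U'; move/matrixP/(_ j l); rewrite !mxE => <-.
by apply: eq_bigr => i _; rewrite !mxE.
Qed.
End LA.
Theorem mainTheorem1 (G : group) (S : G -> Prop) (m : nat) (q : 'I_m -> G -> Rdefinitions.R) :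
  conj_invariant S -> generates S ->
  (forall i, quasi_morphism (q i) /\ homogeneous (q i)) ->
  linearly_independent q ->
  (forall i, exists B : Rdefinitions.R, forall s : G, S s -> `|q i s| <= B) ->
  exists f : ('I_m -> int) -> G, qi_embedding S f.
Proof.
move=> CI Hgen Hq LI HB.
have [gs [N HN]] := basis_ex LI.
pose L i := proj1_sig (constructive_indefinite_description _ (Hgen (ext (gone G) gs i))).
have HL : forall i, walk S (L i) (gone G) (ext (gone G) gs i).
  by move=> i; rewrite /L; case: constructive_indefinite_description.
pose D i := proj1_sig (constructive_indefinite_description _ (proj1 (Hq i))).
have HD : forall i g h, `|q i (gmul g h) - q i g - q i h| <= D i.
  by move=> i; rewrite /D; case: constructive_indefinite_description.
pose B i := proj1_sig (constructive_indefinite_description _ (HB i)).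
have HBi : forall i s, S s -> `|q i s| <= `|B i|.
  move=> i s Ss; apply: le_trans (ler_norm _); move: s Ss.
  by rewrite /B; case: constructive_indefinite_description.
have D0 : forall i, 0 <= D i.
  by move=> i; apply: le_trans (HD i (gone G) (gone G)).
pose Lmax := (\max_(i < m) L i)%N.
pose A := \sum_(j < m) \sum_(i < m) `|N j i| * (`|B i| + D i).
pose A' := \sum_(j < m) \sum_(i < m) `|N j i| * ((2 * m + 1)%:R * D i).
have A0 : 0 <= A.
  by apply: sumr_ge0 => j _; apply: sumr_ge0 => i _; apply: mulr_ge0 => //; apply: addr_ge0.
have A'0 : 0 <= A'.
  by apply: sumr_ge0 => j _; apply: sumr_ge0 => i _; apply: mulr_ge0 => //; apply: mulr_ge0.
exists (FF gs m); exists (1 + Lmax%:R + A), A'.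
have L0 : 0 <= (Lmax%:R : Rdefinitions.R) by [].
split; first lra.
split; first lra.
move=> x y n [Wn Hmin].
have Hup : (n <= l1_dist x y * Lmax)%N.
  apply: leq_trans (Hmin _ (upper CI HL m x y)) _.
  rewrite /l1_dist big_distrl /=; apply: leq_sum => i _.
  rewrite !ext_ord distnC; apply: leq_mul => //.
  rewrite /Lmax; exact: (@leq_bigmax _ (fun i : 'I_m => L i) i).
have Hu : forall i0 : 'I_m,
   `|\sum_(l < m) (y l - x l)%:~R * q i0 (gs l)| <= n%:R * (`|B i0| + D i0) + (2 * m + 1)%:R * D i0.
  move=> i0.
  have [Hqm Hh] := Hq i0.
  have W := walk_from1 Wn.
  have Hw := qm_walk Hh (HD i0) (HBi i0) W.
  have Ey := lower gs Hh (HD i0) m y.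
  have Ex := lower gs Hh (HD i0) m x.
  have E := HD i0 (FF gs m y) (ginv (FF gs m x)).
  move: Hw Ey Ex E; rewrite qmV // ginv1 gmulg1.
  have Ez : forall z : 'I_m -> int, \sum_(i < m) (ext 0 z i)%:~R * q i0 (ext (gone G) gs i)
     = \sum_(l < m) (z l)%:~R * q i0 (gs l).
    by move=> z; apply: eq_bigr => l _; rewrite !ext_ord.
  rewrite (Ez y) (Ez x).
  have -> : \sum_(l < m) (y l - x l)%:~R * q i0 (gs l)
     = \sum_(l < m) (y l)%:~R * q i0 (gs l) - \sum_(l < m) (x l)%:~R * q i0 (gs l).
    by rewrite -sumrB; apply: eq_bigr => l _; rewrite intrB mulrBl.
  set a := \sum_(l < m) _; set b := \sum_(l < m) _.
  set w := q i0 _; set fy := q i0 _; set fx := q i0 _.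
  rewrite natrD natrM mulrDl mul1r.
  have Dp := D0 i0.
  rewrite !ler_norml => /andP[? ?] /andP[? ?] /andP[? ?] /andP[? ?].
  apply/andP; split; nra.
have Hd : forall j, ((y j - x j)%:~R : Rdefinitions.R)
    = \sum_(i < m) N j i * \sum_(l < m) (y l - x l)%:~R * q i (gs l).
  move=> j; under eq_bigr => i _ do rewrite mulr_sumr.
  rewrite exchange_big /=.
  under eq_bigr => l _ do (under eq_bigr => i _ do rewrite mulrCA; rewrite -mulr_sumr HN).
  rewrite (bigD1 j) //= eqxx mulr1 big1 ?addr0 // => l /negbTE.
  by rewrite eq_sym => ->; rewrite mulr0.
have Hdj : forall j, `|((y j - x j)%:~R : Rdefinitions.R)| <=
    n%:R * (\sum_(i < m) `|N j i| * (`|B i| + D i)) + \sum_(i < m) `|N j i| * ((2 * m + 1)%:R * D i).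
  move=> j; rewrite Hd; apply: le_trans (ler_norm_sum _ _ _) _.
  rewrite mulr_sumr -big_split /=; apply: ler_sum => i _; rewrite normrM.
  have := Hu i; have := normr_ge0 (N j i); set u := `|_|; set v := `|_|; nra.
have Hl1 : ((l1_dist x y)%:R : Rdefinitions.R) = \sum_(j < m) `|((y j - x j)%:~R : Rdefinitions.R)|.
  rewrite /l1_dist natr_sum; apply: eq_bigr => j _.
  by rewrite distnC natr_absz intr_norm.
have Hlow : ((l1_dist x y)%:R : Rdefinitions.R) <= n%:R * A + A'.
  rewrite Hl1 /A /A' mulr_sumr -big_split /=; apply: ler_sum => j _; exact: Hdj.
have Hup' : (n%:R : Rdefinitions.R) <= (l1_dist x y)%:R * Lmax%:R.
  by rewrite -natrM ler_nat.
have l0 : 0 <= ((l1_dist x y)%:R : Rdefinitions.R) by [].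
have n0 : 0 <= (n%:R : Rdefinitions.R) by [].
split; last nra.
have Kp : 0 < 1 + Lmax%:R + A by lra.
rewrite lerBlDr ler_pdivrMr //; nra.
Qed.
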